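(* Let $G$ be a finitely generated group and $H$ a subgroup of finite index in $G$, and let $f\in\mathfrak{F}$. If $H\in\mathcal{B}_f$, then $G\in\mathcal{B}_f$.
   Context: $\mathfrak{F}$ is the set of nondecreasing functions from some interval $[Q,\infty)\cap\mathbb{N}$ to the nonnegative reals; $g\preceq f$ means there exist $N\ge0$ and positive integers $K,M$ with $g(n)\le Kf(Mn)$ for all $n\ge N$. For a group $G$ with finite generating set $A$, $S=A\cup A^{-1}$, $\pi:S^*\to G$ the evaluation map and $d_A$ the word metric: a Cayley automatic representation is a bijection $\psi:L\to G$ from a regular $L\subseteq S^*$ such that for each $a\in A$ the relation $\{(\psi^{-1}(g),\psi^{-1}(ga)) : g\in G\}$ is FA-recognizable (i.e., the language of convolutions — parallel readings of the two strings with the shorter padded by a new symbol — is regular). Its function is $h(n)=\max\{d_A(\pi(w),\psi(w)): w\in L,|w|\le n\}$, and $G\in\mathcal{B}_f$ means some Cayley automatic representation (for some finite generating set; this is independent of the choice) has $h\preceq f$. *)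

(* Defs.v *)
From Stdlib Require Import Reals.
From mathcomp Require Import all_boot.
Set Implicit Arguments. Unset Strict Implicit. Unset Printing Implicit Defensive.

Record grp := Grp {
  gcar :> Type;
  gmul : gcar -> gcar -> gcar;
  gone : gcar;
  ginv : gcar -> gcar;
  gmulA : forall x y z, gmul x (gmul y z) = gmul (gmul x y) z;
  gmul1 : forall x, gmul gone x = x;
  gmulV : forall x, gmul (ginv x) x = gone
}.

Definition is_hom (H G : grp) (phi : H -> G) : Prop :=
  forall x y, phi (gmul x y) = gmul (phi x) (phi y).

Definition finite_index_image (H G : grp) (phi : H -> G) : Prop :=
  exists reps : list G, forall g : G,
    exists r, List.In r reps /\ exists h : H, g = gmul (phi h) r.

(* A finite generating set A is given by k elements gens : 'I_k -> G.
   A letter (i, false) stands for a_i, (i, true) for a_i^{-1}. *)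
Definition letter (k : nat) := ('I_k * bool)%type.

Definition letter_val (G : grp) k (gens : 'I_k -> G) (l : letter k) : G :=
  if l.2 then ginv (gens l.1) else gens l.1.

Definition eval_word (G : grp) k (gens : 'I_k -> G) (w : seq (letter k)) : G :=
  foldr (fun l acc => gmul (letter_val gens l) acc) (gone G) w.

Definition generates (G : grp) k (gens : 'I_k -> G) : Prop :=
  forall g : G, exists w, eval_word gens w = g.

Definition finitely_generated (G : grp) : Prop :=
  exists k (gens : 'I_k -> G), generates gens.

(* d_A(x, y) <= m  (word metric: length of a shortest word for x^{-1} y) *)
Definition word_dist_le (G : grp) k (gens : 'I_k -> G) (x y : G) (m : nat) : Prop :=
  exists w, size w <= m /\ eval_word gens w = gmul (ginv x) y.

Record dfa (T : finType) := Dfa {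
  dstate : finType;
  dstart : dstate;
  dfinal : pred dstate;
  dtrans : dstate -> T -> dstate
}.

Definition dfa_accepts (T : finType) (D : dfa T) (w : seq T) : bool :=
  @dfinal T D (foldl (@dtrans T D) (@dstart T D) w).

Definition regular (T : finType) (L : seq T -> Prop) : Prop :=
  exists D : dfa T, forall w, L w <-> dfa_accepts D w.

(* convolution of two strings: parallel reading, the shorter one padded
   with the new symbol None *)
Definition conv (T : Type) (u v : seq T) : seq (option T * option T) :=
  [seq (nth None (map Some u) i, nth None (map Some v) i)
     | i <- iota 0 (maxn (size u) (size v))].

Definition fa_recognizable (T : finType) (Rel : seq T -> seq T -> Prop) : Prop :=
  regular (fun x : seq (option T * option T) => exists u v, Rel u v /\ x = conv u v).

Definition cayley_automatic_rep (G : grp) k (gens : 'I_k -> G)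
    (L : seq (letter k) -> Prop) (psi : seq (letter k) -> G) : Prop :=
  [/\ regular L,
      (forall u v, L u -> L v -> psi u = psi v -> u = v),
      (forall g : G, exists2 w, L w & psi w = g) &
      (forall i : 'I_k,
         fa_recognizable (fun u v => [/\ L u, L v & psi v = gmul (psi u) (gens i)]))].

(* f : nat -> R, meaningful on [Q, oo); nondecreasing and nonnegative there *)
Definition in_frakF (Q : nat) (f : nat -> R) : Prop :=
  (forall n m, Q <= n -> n <= m -> Rle (f n) (f m)) /\
  (forall n, Q <= n -> Rle 0 (f n)).

(* h \preceq f, where h(n) = max { d_A(pi w, psi w) : w \in L, |w| <= n }.
   "h(n) <= K f(M n)" is written out as: every such distance is <= K f(M n).
   N >= Q ensures f is only evaluated on its domain (M >= 1). *)
Definition rep_function_preceq (G : grp) k (gens : 'I_k -> G)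
    (L : seq (letter k) -> Prop) (psi : seq (letter k) -> G)
    (Q : nat) (f : nat -> R) : Prop :=
  exists N K M : nat, [/\ Q <= N, 0 < K, 0 < M &
    forall n, N <= n -> forall w, L w -> size w <= n ->
      exists m : nat, word_dist_le gens (eval_word gens w) (psi w) m /\
                      Rle (INR m) (Rmult (INR K) (f (M * n)%N))].

Definition in_Bf (G : grp) (Q : nat) (f : nat -> R) : Prop :=
  exists k (gens : 'I_k -> G), generates gens /\
    exists L psi, cayley_automatic_rep gens L psi /\ rep_function_preceq gens L psi Q f.

(* Main.v *)
Require Import Defs.
From Stdlib Require Import Reals.
From mathcomp Require Import all_boot.
From Stdlib Require Import ClassicalEpsilon Lra.
From mathcomp Require Import zify.
Set Implicit Arguments. Unset Strict Implicit. Unset Printing Implicit Defensive.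

Definition pb (P : Prop) : bool := if excluded_middle_informative P then true else false.
Lemma pbE (P : Prop) : pb P <-> P.
Proof. by rewrite /pb; case: excluded_middle_informative. Qed.

Record nfa (T : finType) := Nfa {
  nst : finType; nstart : nst -> Prop; nfin : nst -> Prop; ntr : nst -> T -> nst -> Prop }.

Fixpoint nacc_from (T : finType) (N : nfa T) (q : nst N) (w : seq T) : Prop :=
  match w with [::] => nfin q | x :: w' => exists q', ntr q x q' /\ nacc_from q' w' end.
Definition nacc (T : finType) (N : nfa T) (w : seq T) := exists q : nst N, nstart q /\ nacc_from q w.

Section Det.
Variables (T : finType) (N : nfa T).
Definition det : dfa T := @Dfa T {set (nst N)} [set q | pb (nstart q)]
  (fun X => pb (exists q, q \in X /\ nfin q))
  (fun X x => [set q' | pb (exists q, q \in X /\ ntr q x q')]).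
Lemma det_run X w : dfinal (foldl (@dtrans _ det) X w) <-> exists q, q \in X /\ nacc_from q w.
Proof.
elim: w X => [|x w IH] X /=; first by rewrite pbE.
rewrite IH; split.
- move=> [q' [/[!inE] /pbE [q [qX tr]] acc]]; exists q; split=> //; by exists q'.
- move=> [q [qX [q' [tr acc]]]]; exists q'; split=> //; rewrite inE; apply/pbE; by exists q.
Qed.
End Det.

Lemma nfa_regular (T : finType) (L : seq T -> Prop) (N : nfa T) :
  (forall w, L w <-> nacc N w) -> regular L.
Proof.
move=> H; exists (det N) => w; rewrite H /dfa_accepts det_run /nacc.
by split=> -[q [a b]]; exists q; split=> //; move: a; rewrite inE => /pbE.
Qed.

Definition nfa_of (T : finType) (D : dfa T) : nfa T :=
  @Nfa T (dstate D) (fun q => q = dstart D) (fun q => dfinal q) (fun q x q' => q' = dtrans q x).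
Lemma nfa_of_run (T : finType) (D : dfa T) q w :
  @nacc_from _ (nfa_of D) q w <-> dfinal (foldl (@dtrans _ D) q w).
Proof.
elim: w q => [|x w IH] q /=; first by [].
split; first by move=> [q' [-> /IH]].
by move=> h; exists (dtrans q x); split=> //; apply/IH.
Qed.
Lemma regular_nfa (T : finType) (L : seq T -> Prop) :
  regular L -> exists N : nfa T, forall w, L w <-> nacc N w.
Proof.
move=> [D HD]; exists (nfa_of D) => w; rewrite HD /nacc; split.
- by move=> h; exists (dstart D); split=> //; apply/nfa_of_run.
- by move=> [q [/= -> /nfa_of_run]].
Qed.

Lemma regular_ext (T : finType) (L1 L2 : seq T -> Prop) :
  (forall w, L1 w <-> L2 w) -> regular L1 -> regular L2.
Proof. by move=> E [D HD]; exists D => w; rewrite -E. Qed.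

Lemma regular_and (T : finType) (L1 L2 : seq T -> Prop) :
  regular L1 -> regular L2 -> regular (fun w => L1 w /\ L2 w).
Proof.
move=> /regular_nfa [N1 H1] /regular_nfa [N2 H2].
apply: (@nfa_regular _ _ (@Nfa T (nst N1 * nst N2)%type
   (fun q => nstart q.1 /\ nstart q.2) (fun q => nfin q.1 /\ nfin q.2)
   (fun q x q' => ntr q.1 x q'.1 /\ ntr q.2 x q'.2))) => w.
have E : forall q1 q2, (nacc_from q1 w /\ nacc_from q2 w) <->
   @nacc_from _ (@Nfa T (nst N1 * nst N2)%type
   (fun q => nstart q.1 /\ nstart q.2) (fun q => nfin q.1 /\ nfin q.2)
   (fun q x q' => ntr q.1 x q'.1 /\ ntr q.2 x q'.2)) (q1, q2) w.
  elim: w => [|x w IH] q1 q2 //=; split.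
  - move=> [[q1' [t1 a1]] [q2' [t2 a2]]]; exists (q1', q2'); split=> //; exact/IH.
  - move=> [[q1' q2'] [[t1 t2] /IH [a1 a2]]]; split; [exists q1'|exists q2']; by [].
rewrite H1 H2 /nacc; split.
- move=> [[q1 [s1 a1]] [q2 [s2 a2]]]; exists (q1, q2); split=> //; exact/E.
- move=> [[q1 q2] [[s1 s2] /E [a1 a2]]]; split; [exists q1|exists q2]; by [].
Qed.

Lemma regular_or (T : finType) (L1 L2 : seq T -> Prop) :
  regular L1 -> regular L2 -> regular (fun w => L1 w \/ L2 w).
Proof.
move=> /regular_nfa [N1 H1] /regular_nfa [N2 H2].
pose N := @Nfa T (nst N1 + nst N2)%type
   (fun q => match q with inl a => nstart a | inr b => nstart b end)
   (fun q => match q with inl a => nfin a | inr b => nfin b end)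
   (fun q x q' => match q, q' with inl a, inl a' => ntr a x a'
                   | inr b, inr b' => ntr b x b' | _, _ => False end).
have E1 : forall q w, nacc_from q w <-> @nacc_from _ N (inl q) w.
  move=> q w; elim: w q => [|x w IH] q //=; split.
  - by move=> [q' [t a]]; exists (inl q'); split=> //; exact/IH.
  - by move=> [[q'|q'] [t a]] //; exists q'; split=> //; exact/IH.
have E2 : forall q w, nacc_from q w <-> @nacc_from _ N (inr q) w.
  move=> q w; elim: w q => [|x w IH] q //=; split.
  - by move=> [q' [t a]]; exists (inr q'); split=> //; exact/IH.
  - by move=> [[q'|q'] [t a]] //; exists q'; split=> //; exact/IH.
apply: (@nfa_regular _ _ N) => w; rewrite H1 H2 /nacc; split.
- by move=> [[q [s a]]|[q [s a]]]; [exists (inl q); rewrite -E1|exists (inr q); rewrite -E2].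
- by move=> [[q|q] [s a]]; [left; exists q; rewrite E1|right; exists q; rewrite E2].
Qed.

Lemma regular_empty (T : finType) : regular (fun _ : seq T => False).
Proof.
by exists (@Dfa T unit tt (fun _ => false) (fun _ _ => tt)).
Qed.

Lemma regular_bigor (T : finType) (I : Type) (F : I -> seq T -> Prop) (s : seq I) :
  (forall i, regular (F i)) -> regular (fun w => exists i, List.In i s /\ F i w).
Proof.
move=> HF; elim: s => [|i s IH] /=.
  by apply: regular_ext (@regular_empty T) => w; split=> // -[i []].
apply: regular_ext (regular_or (HF i) IH) => w; split.
- by move=> [h|[j [a b]]]; [exists i; split; [left|]|exists j; split; [right|]].
- by move=> [j [[<-|a] b]]; [left|right; exists j].
Qed.

Lemma regular_map (T U : finType) (g : T -> U) (L : seq U -> Prop) :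
  regular L -> regular (fun w => L (map g w)).
Proof.
move=> [D HD]; exists (@Dfa T (dstate D) (dstart D) (@dfinal _ D) (fun q x => dtrans q (g x))).
move=> w; rewrite HD /dfa_accepts /=; suff -> : forall q, foldl (fun q x => dtrans q (g x)) q w = foldl (@dtrans _ D) q (map g w) by [].
by elim: w => //= x w IH q; rewrite IH.
Qed.

Section Pad.
Variable T : finType.
Definition pad n (u : seq T) : seq (option T) := map Some u ++ nseq (n - size u) None.
Definition NN : option T * option T := (None, None).

Lemma size_pad n u : size u <= n -> size (pad n u) = n.
Proof. by move=> h; rewrite /pad size_cat size_map size_nseq; lia. Qed.

Lemma pmap_nseqNone k : pmap (@id (option T)) (nseq k None) = [::].
Proof. by elim: k. Qed.
Lemma pmap_mapSome (u : seq T) : pmap id (map Some u) = u.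
Proof. by elim: u => //= a u ->. Qed.
Lemma unpad_pad n u : pmap id (pad n u) = u.
Proof. by rewrite /pad pmap_cat pmap_nseqNone pmap_mapSome cats0. Qed.
Lemma pad_cat n j u : size u <= n -> pad n u ++ nseq j None = pad (n + j) u.
Proof. by move=> h; rewrite /pad -catA -nseqD; congr (_ ++ nseq _ _); lia. Qed.

Lemma nth_pad n u i : nth None (pad n u) i = nth None (map Some u) i.
Proof.
rewrite /pad nth_cat; case: ltnP => // h.
by rewrite nth_nseq nth_default ?if_same.
Qed.

Lemma zip_nseq j : zip (nseq j (@None T)) (nseq j None) = nseq j NN.
Proof. by elim: j => //= j ->. Qed.

Lemma conv_pad (u v : seq T) :
  conv u v = zip (pad (maxn (size u) (size v)) u) (pad (maxn (size u) (size v)) v).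
Proof.
apply: (@eq_from_nth _ NN).
  by rewrite /conv size_map size_iota size1_zip ?size_pad //; lia.
move=> i; rewrite /conv size_map size_iota => hi.
rewrite (nth_map 0) ?size_iota // nth_iota // add0n nth_zip ?size_pad //; try lia.
by rewrite !nth_pad.
Qed.

Lemma zip_pad_split (u v : seq T) m n : size u <= m -> size v <= m -> m <= n ->
  zip (pad n u) (pad n v) = zip (pad m u) (pad m v) ++ nseq (n - m) NN.
Proof.
move=> hu hv hn; have -> : n = m + (n - m) by lia.
rewrite -!pad_cat // zip_cat ?size_pad // -zip_nseq; congr (_ ++ zip _ _); congr nseq; lia.
Qed.

Lemma nth_mapSome_lt (u : seq T) i : i < size u -> nth None (map Some u) i != None.
Proof. by elim: u i => [|a u IH] [|i] //= h; apply: IH. Qed.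

Lemma conv_noNN (u v : seq T) : NN \notin conv u v.
Proof.
apply/negP => /(nthP NN) [i]; rewrite /conv size_map size_iota => hi.
rewrite (nth_map 0) ?size_iota // nth_iota // add0n => -[].
case: (ltnP i (size u)) => h1.
  by move=> e; move: (nth_mapSome_lt h1); rewrite e.
have h2 : i < size v by lia.
by move=> _ e; move: (nth_mapSome_lt h2); rewrite e.
Qed.
End Pad.

Section PL.
Variable T : finType.
Definition PL (R : seq T -> seq T -> Prop) (x : seq (option T * option T)) :=
  exists u v n, [/\ R u v, size u <= n, size v <= n & x = zip (pad n u) (pad n v)].
Definition convL (R : seq T -> seq T -> Prop) (x : seq (option T * option T)) :=
  exists u v, R u v /\ x = conv u v.

Lemma PL_conv R x : PL R x <-> exists y j, convL R y /\ x = y ++ nseq j (NN T).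
Proof.
rewrite /PL; split.
- move=> [u [v [n [r hu hv ->]]]]; exists (conv u v), (n - maxn (size u) (size v)); split.
    by exists u, v.
  by rewrite conv_pad (@zip_pad_split _ u v (maxn (size u) (size v))) //; lia.
- move=> [y [j [[u [v [r ->]]] ->]]]; exists u, v, (maxn (size u) (size v) + j); split=> //; try lia.
  by rewrite conv_pad (@zip_pad_split _ u v (maxn (size u) (size v)) (maxn (size u) (size v) + j)) ?addKn //; lia.
Qed.

Lemma conv2PL R : regular (convL R) -> regular (PL R).
Proof.
move=> /regular_nfa [N HN].
pose M := @Nfa _ (nst N * bool)%type (fun q => nstart q.1 /\ q.2 = false) (fun q => nfin q.1)
  (fun q x q' => if x == NN T then q'.1 = q.1 /\ q'.2 = true
                 else [/\ q.2 = false, q'.2 = false & ntr q.1 x q'.1]).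
have Etrue : forall q x, @nacc_from _ M (q, true) x <-> x = nseq (size x) (NN T) /\ nfin q.
  move=> q x; elim: x q => [|a x IH] q /=; first by split=> [h|[]].
  split.
  - move=> [[q' b'] []]; case: eqP => [-> /= [-> ->] /IH [h1 h2]|_ [] //].
    by split=> //; rewrite -h1.
  - move=> [[-> e] h]; exists (q, true); rewrite eqxx; split=> //; apply/IH; by split.
have Efalse : forall q x, @nacc_from _ M (q, false) x <->
    exists y j, [/\ x = y ++ nseq j (NN T), NN T \notin y & nacc_from q y].
  move=> q x; elim: x q => [|a x IH] q /=.
    split; first by move=> h; exists [::], 0.
    by move=> [[|b y] [[|j] [//= _ _ h]]].
  split.
  - move=> [[q' b'] []]; case: eqP => [-> /= [-> ->] /Etrue [h1 h2]|ne /= [_ -> tr] /IH [y [j [e ny acc]]]].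
      by exists [::], (size x).+1; rewrite /= -h1.
    exists (a :: y), j; split; first by rewrite e.
      by rewrite inE negb_or ny andbT; apply/eqP => e'; apply: ne.
    by exists q'.
  - move=> [[|b y] [j [/= e ny acc]]].
      case: j e => [//|j] [-> ->]; exists (q, true); rewrite eqxx; split=> //.
      by apply/Etrue; rewrite size_nseq.
    case: e => -> ex; move: ny; rewrite inE negb_or => /andP [nb ny].
    move: acc => [q' [tr acc]]; exists (q', false); rewrite eq_sym (negbTE nb); split=> //.
    by apply/IH; exists y, j.
apply: (@nfa_regular _ _ M) => x; rewrite PL_conv; split.
- move=> [y [j [cy ->]]]; move: (cy) => /HN [q [s acc]]; exists (q, false); split=> //.
  apply/Efalse; exists y, j; split=> //; case: cy => [u [v [_ ->]]]; exact: conv_noNN.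
- move=> [[q b] [[/= s ->] /Efalse [y [j [-> ny acc]]]]]; exists y, j; split=> //.
  by apply/HN; exists q.
Qed.

Lemma PL2conv R : regular (PL R) -> regular (convL R).
Proof.
move=> hP.
have hT : regular (fun x : seq (option T * option T) => forall y, x <> rcons y (NN T)).
  exists (@Dfa _ bool false (fun b => ~~ b) (fun _ a => a == NN T)) => x.
  rewrite /dfa_accepts /=; case/lastP: x => [|y a]; first by split=> // _ [].
  rewrite foldl_rcons; split.
  - by move=> h; apply/negP => /eqP e; apply: (h y); rewrite e.
  - by move=> /eqP ne y' /rcons_inj [_ e]; apply: ne.
apply: regular_ext (regular_and hP hT) => x; split.
- move=> [/PL_conv [y [j [cy ->]]] nt]; case: j nt => [|j] nt; first by rewrite cats0.
  by exfalso; apply: (nt (y ++ nseq j (NN T))); rewrite rcons_cat; congr (_ ++ _); by elim: j {nt} => //= j <-.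
- move=> cx; split; first by apply/PL_conv; exists x, 0; rewrite cats0.
  move=> y e; case: cx => [u [v [_ ex]]]; move: (conv_noNN u v); rewrite -ex e.
  by rewrite mem_rcons inE eqxx.
Qed.

Lemma convL_swap R : regular (convL R) -> regular (convL (fun u v => R v u)).
Proof.
move=> h; have := regular_map (fun p : option T * option T => (p.2, p.1)) h.
apply: regular_ext => x; split.
- move=> [u [v [r e]]]; exists v, u; split=> //.
  have -> : x = map (fun p : option T * option T => (p.2, p.1)) (map (fun p => (p.2, p.1)) x).
    by rewrite -map_comp map_id_in // => -[].
  by rewrite e /conv -map_comp maxnC.
- move=> [v [u [r ->]]]; exists u, v; split=> //.
  by rewrite /conv -map_comp maxnC.
Qed.

Lemma convL_id (L : seq T -> Prop) : regular L -> regular (convL (fun u v => L u /\ v = u)).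
Proof.
move=> /regular_nfa [N HN].
pose M := @Nfa _ (nst N) (@nstart _ N) (@nfin _ N)
  (fun q x q' => exists t, x = (Some t, Some t) /\ ntr q t q').
have E : forall q x, @nacc_from _ M q x <-> exists u, x = map (fun t => (Some t, Some t)) u /\ @nacc_from _ N q u.
  move=> q x; elim: x q => [|a x IH] q /=; first by split=> [h|[[|? ?] [] // ->]]; first by exists [::].
  split.
  - move=> [q' [[t [-> tr]] /IH [u [-> acc]]]]; exists (t :: u); split=> //; by exists q'.
  - move=> [[|t u] [//= [-> e] [q' [tr acc]]]]; exists q'; split; first by exists t.
    by apply/IH; exists u.
apply: (@nfa_regular _ _ M) => x; split.
- move=> [u [_ [[lu ->] ->]]]; move: lu => /HN [q [s acc]]; exists q; split=> //; apply/E; exists u.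
  split=> //; apply: (@eq_from_nth _ (NN T)); rewrite /conv !size_map size_iota maxnn //.
  move=> i hi; rewrite (nth_map 0) ?size_iota // nth_iota // add0n.
  elim: u i hi {acc} => [|a u IH] [|i] //= hi; exact: IH.
- move=> [q [s /E [u [-> acc]]]]; exists u, u; split; first by split=> //; apply/HN; exists q.
  apply: (@eq_from_nth _ (NN T)); first by rewrite /conv !size_map size_iota maxnn.
  move=> i; rewrite size_map => hi; symmetry; rewrite /conv maxnn (nth_map 0) ?size_iota // nth_iota // add0n.
  elim: u i hi {acc} => [|a u IH] [|i] //= hi; exact: IH.
Qed.
End PL.

Section Comp.
Variable T : finType.
Implicit Types (u v w : seq T).

Lemma size_unpad (s : seq (option T)) : size (pmap id s) <= size s.
Proof. by rewrite size_pmap count_size. Qed.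

Lemma unpad_catNone (s : seq (option T)) j : pmap id (s ++ nseq j None) = pmap id s.
Proof. by rewrite pmap_cat pmap_nseqNone cats0. Qed.

Lemma take_pad n N u : size u <= n -> n <= N -> take n (pad N u) = pad n u.
Proof.
move=> h1 h2; have -> : N = n + (N - n) by lia.
by rewrite -pad_cat // take_size_cat // size_pad.
Qed.

Lemma zip_pairNone (s : seq (option T)) :
  map (fun b => (@None T, b)) s = zip (nseq (size s) None) s.
Proof. by elim: s => //= b s ->. Qed.
Lemma zip_pairNone2 (s : seq (option T)) :
  map (fun b => (b, @None T)) s = zip s (nseq (size s) None).
Proof. by elim: s => //= b s ->. Qed.

Lemma PL_comp R1 R2 : regular (PL R1) -> regular (PL R2) ->
  regular (PL (fun u w => exists v, R1 u v /\ R2 v w)).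
Proof.
move=> [D1 H1] [D2 H2].
pose M := @Nfa _ (dstate D1 * dstate D2)%type (fun q => q = (dstart D1, dstart D2))
  (fun q => exists s : seq (option T),
     dfinal (foldl (@dtrans _ D1) q.1 (map (fun b => (None, b)) s)) /\
     dfinal (foldl (@dtrans _ D2) q.2 (map (fun b => (b, None)) s)))
  (fun q x q' => exists b, q'.1 = dtrans q.1 (x.1, b) /\ q'.2 = dtrans q.2 (b, x.2)).
have E : forall q1 q2 x, @nacc_from _ M (q1, q2) x <-> exists y s, [/\ size y = size x,
    dfinal (foldl (@dtrans _ D1) q1 (zip (unzip1 x) y ++ map (fun b => (None, b)) s)) &
    dfinal (foldl (@dtrans _ D2) q2 (zip y (unzip2 x) ++ map (fun b => (b, None)) s))].
  move=> q1 q2 x; elim: x q1 q2 => [|a x IH] q1 q2 /=.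
    split; first by move=> [s [h1 h2]]; exists [::], s.
    by move=> [y [s [sy h1 h2]]]; case: y sy h1 h2 => // _ h1 h2; exists s.
  split.
  - move=> [[q1' q2'] [[b /= [-> ->]] /IH [y [s [sy h1 h2]]]]].
    by exists (b :: y), s; split=> //=; rewrite sy.
  - move=> [[|b y] [s [//= [sy] h1 h2]]]; exists (dtrans q1 (a.1, b), dtrans q2 (b, a.2)).
    split; first by exists b.
    by apply/IH; exists y, s.
apply: (@nfa_regular _ _ M) => x; split.
- move=> [u [w [n [[v [r1 r2]] hu hw ->]]]].
  set N := maxn n (size v).
  exists (dstart D1, dstart D2); split=> //; apply/E.
  exists (take n (pad N v)), (drop n (pad N v)).
  have sv : size (pad N v) = N by rewrite size_pad //; lia.
  rewrite unzip1_zip ?unzip2_zip ?size_pad //; split.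
  + by rewrite size_takel ?size1_zip ?size_pad //; lia.
  + rewrite zip_pairNone -zip_cat ?size_takel ?size_pad //; try lia.
    rewrite cat_take_drop pad_cat // size_drop sv; apply/H1; exists u, v, N; split=> //; try lia.
    by congr zip; congr pad; lia.
  + rewrite zip_pairNone2 -zip_cat ?size_takel ?size_pad //; try lia.
    rewrite cat_take_drop pad_cat // size_drop sv; apply/H2; exists v, w, N; split=> //; try lia.
    by congr zip; congr pad; lia.
- move=> [[q1 q2] [/= [-> ->] /E [y [s [sy h1 h2]]]]].
  move: h1 h2; rewrite zip_pairNone zip_pairNone2 -!zip_cat ?size_map ?size_nseq //.
  move=> /H1 [u [v [N1 [r1 hu hv e1]]]] /H2 [v' [w [N2 [r2 hv' hw e2]]]].
  have sN1 : N1 = size x + size s.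
    by move/(congr1 size): e1; rewrite !size_zip !size_pad // !size_cat size_map size_nseq sy !minnn.
  have sN2 : N2 = size x + size s.
    by move/(congr1 size): e2; rewrite !size_zip !size_pad // !size_cat size_map size_nseq sy !minnn.
  have sx : size (unzip1 x) = size x by rewrite size_map.
  have sx2 : size (unzip2 x) = size x by rewrite size_map.
  have ex1 : pad N1 u = unzip1 x ++ nseq (size s) None.
    move/(congr1 unzip1): e1; rewrite !unzip1_zip ?size_pad ?size_cat ?sx ?size_nseq ?sy //; lia.
  have ey1 : pad N1 v = y ++ s.
    move/(congr1 unzip2): e1; rewrite !unzip2_zip ?size_pad ?size_cat ?sx ?size_nseq ?sy //; lia.
  have ey2 : pad N2 v' = y ++ s.
    move/(congr1 unzip1): e2; rewrite !unzip1_zip ?size_pad ?size_cat ?sx2 ?size_nseq ?sy //; lia.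
  have ex2 : pad N2 w = unzip2 x ++ nseq (size s) None.
    move/(congr1 unzip2): e2; rewrite !unzip2_zip ?size_pad ?size_cat ?sx2 ?size_nseq ?sy //; lia.
  have vv : v' = v by rewrite -(unpad_pad N2 v') -(unpad_pad N1 v) ey1 ey2.
  subst v'.
  have eu : u = pmap id (unzip1 x) by rewrite -(unpad_pad N1 u) ex1 unpad_catNone.
  have ew : w = pmap id (unzip2 x) by rewrite -(unpad_pad N2 w) ex2 unpad_catNone.
  have su : size u <= size x by rewrite eu (leq_trans (size_unpad _)) // size_map.
  have sw : size w <= size x by rewrite ew (leq_trans (size_unpad _)) // size_map.
  exists u, w, (size x); split=> //; first by exists v.
  transitivity (zip (unzip1 x) (unzip2 x)); first by rewrite zip_unzip.
  have t1 : N1 >= size x by lia.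
  have t2 : N2 >= size x by lia.
  congr zip.
  + by rewrite -(take_pad su t1) ex1 take_size_cat.
  + by rewrite -(take_pad sw t2) ex2 take_size_cat.
Qed.
End Comp.

Section App.
Variables (T T' : finType) (e : T -> T') (d : T' -> option T).
Hypothesis de : forall t, d (e t) = Some t.

Definition Check (c : T') (s : seq (option T')) :=
  exists u n, s = map Some (rcons (map e u) c) ++ nseq n None.

Lemma check_regular c : regular (Check c).
Proof.
pose M := @Nfa _ bool (fun b => b = false) (fun b => b = true)
  (fun b x b' => [\/ [/\ b = false, b' = false & exists t, x = Some (e t)],
                    [/\ b = false, b' = true & x = Some c] |
                    [/\ b = true, b' = true & x = None]]).
have Et : forall s, @nacc_from _ M true s <-> s = nseq (size s) None.
  elim=> [|a s IH] /=; first by [].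
  split.
  - by move=> [b' [[[]|[]|[_ -> ->]] //] /IH {1}->].
  - by move=> [-> e']; exists true; split; [apply: Or33|apply/IH].
have Ef : forall s, @nacc_from _ M false s <-> Check c s.
  elim=> [|a s IH] /=; first by split=> // -[u [n]]; case: u.
  split.
  - move=> [b' [[[_ -> [t ->]]|[_ -> ->]|[//]] acc]].
      by move/IH: acc => [u [n ->]]; exists (t :: u), n.
    by move/Et: acc => e'; exists [::], (size s); rewrite {1}e'.
  - move=> [[|t u] [n /= [-> es]]].
      by exists true; split; [apply: Or32|apply/Et; rewrite es size_nseq].
    by exists false; split; [apply: Or31; split=> //; exists t|apply/IH; exists u, n].
by apply: (@nfa_regular _ _ M) => s; rewrite -Ef; split=> [h|[b [-> h]]] //; exists false.
Qed.

Definition decp (p : option T' * option T') := (obind d p.1, obind d p.2).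

Lemma map_decp_zip (a b : seq (option T')) :
  map decp (zip a b) = zip (map (obind d) a) (map (obind d) b).
Proof. by elim: a b => [|x a IH] [|y b] //=; rewrite IH. Qed.

Lemma mapd_pad n u c : d c = None -> size u < n ->
  map (obind d) (pad n (rcons (map e u) c)) = pad n u.
Proof.
move=> dc h; rewrite /pad map_cat map_rcons map_rcons size_rcons size_map map_nseq /= dc.
have -> : n - size u = (n - (size u).+1).+1 by lia.
rewrite -cats1 -catA /=; congr (_ ++ _).
by elim: u {h} => //= t u ->; rewrite de.
Qed.

Lemma check_pad c s : Check c s -> exists u, size u < size s /\ s = pad (size s) (rcons (map e u) c).
Proof.
move=> [u [n ->]]; exists u; rewrite /pad size_cat !size_map size_rcons size_map size_nseq.
by split; [lia|congr (_ ++ nseq _ _); lia].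
Qed.

Variables (r r' : T').
Hypotheses (dr : d r = None) (dr' : d r' = None).

Lemma PL_app R : regular (PL R) -> regular (PL (fun u' v' =>
  exists u v, [/\ R u v, u' = rcons (map e u) r & v' = rcons (map e v) r'])).
Proof.
move=> hR.
have := regular_and (regular_map decp hR)
   (regular_and (regular_map fst (check_regular r)) (regular_map snd (check_regular r'))).
apply: regular_ext => x; split.
- move=> [hP [h1 h2]]; move: (check_pad h1) (check_pad h2).
  rewrite !size_map => -[u1 [s1 e1]] [v1 [s2 e2]].
  move: hP => [u [v [N [ruv hu hv ex]]]].
  have ed : map decp x = zip (pad (size x) u1) (pad (size x) v1).
    have u1x : unzip1 x = pad (size x) (rcons (map e u1) r) := e1.
    have u2x : unzip2 x = pad (size x) (rcons (map e v1) r') := e2.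
    transitivity (map decp (zip (unzip1 x) (unzip2 x))); first by rewrite zip_unzip.
    by rewrite map_decp_zip u1x u2x !mapd_pad.
  have hu1 : u1 = u.
    rewrite -(unpad_pad (size x) u1) -(unpad_pad N u).
    move/(congr1 unzip1): ex; rewrite unzip1_zip ?size_pad // => <-.
    by rewrite ed unzip1_zip ?size_pad //; lia.
  have hv1 : v1 = v.
    rewrite -(unpad_pad (size x) v1) -(unpad_pad N v).
    move/(congr1 unzip2): ex; rewrite unzip2_zip ?size_pad // => <-.
    by rewrite ed unzip2_zip ?size_pad //; lia.
  subst u1 v1.
  exists (rcons (map e u) r), (rcons (map e v) r'), (size x); split.
  + by exists u, v.
  + by rewrite size_rcons size_map.
  + by rewrite size_rcons size_map.
  + have u1x : unzip1 x = pad (size x) (rcons (map e u) r) := e1.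
    have u2x : unzip2 x = pad (size x) (rcons (map e v) r') := e2.
    by rewrite -u1x -u2x zip_unzip.
- move=> [u' [v' [n [[u [v [ruv -> ->]]] hu hv ->]]]].
  move: hu hv; rewrite !size_rcons !size_map => hu hv.
  split; last split.
  + rewrite map_decp_zip !mapd_pad //; exists u, v, n; split=> //; lia.
    change (Check r (unzip1 (zip (pad n (rcons (map e u) r)) (pad n (rcons (map e v) r'))))).
    rewrite unzip1_zip ?size_pad ?size_rcons ?size_map //.
    by exists u, (n - (size u).+1); rewrite /pad size_rcons size_map.
  + change (Check r' (unzip2 (zip (pad n (rcons (map e u) r)) (pad n (rcons (map e v) r'))))).
    rewrite unzip2_zip ?size_pad ?size_rcons ?size_map //.
    by exists v, (n - (size v).+1); rewrite /pad size_rcons size_map.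
Qed.
End App.

Section Grp.
Variable G : grp.
Local Notation "x * y" := (gmul x y).
Local Notation "1" := (gone G).
Local Notation "x ^-1" := (ginv x).

Lemma gp_mulV (x : G) : x * x^-1 = 1.
Proof.
rewrite -(gmul1 (x * x^-1)) -{1}(gmulV (x^-1)) -gmulA (gmulA (x^-1)) gmulV gmul1.
exact: gmulV.
Qed.
Lemma gp_mul1 (x : G) : x * 1 = x.
Proof. by rewrite -(gmulV x) gmulA gp_mulV gmul1. Qed.
Lemma gp_mulKl (x y : G) : x^-1 * (x * y) = y.
Proof. by rewrite gmulA gmulV gmul1. Qed.
Lemma gp_mulKr (x y : G) : (y * x) * x^-1 = y.
Proof. by rewrite -gmulA gp_mulV gp_mul1. Qed.
Lemma gp_mulI (x y z : G) : x * y = x * z -> y = z.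
Proof. by move=> h; rewrite -(gp_mulKl x y) h gp_mulKl. Qed.
Lemma gp_mulIr (x y z : G) : y * x = z * x -> y = z.
Proof. by move=> h; rewrite -(gp_mulKr x y) h gp_mulKr. Qed.
Lemma gp_invM (x y : G) : (x * y)^-1 = y^-1 * x^-1.
Proof.
apply: (@gp_mulI (x * y)); rewrite gp_mulV -gmulA (gmulA y) gp_mulV gmul1 gp_mulV //.
Qed.
Lemma gp_inv_uniq (x y : G) : x * y = 1 -> y = x^-1.
Proof. by move=> h; apply: (@gp_mulI x); rewrite h gp_mulV. Qed.
End Grp.

Section Hom.
Variables (H G : grp) (phi : H -> G).
Hypothesis hom : is_hom phi.
Lemma hom1 : phi (gone H) = gone G.
Proof.
apply: (@gp_mulI _ (phi (gone H))); rewrite -hom gmul1 gp_mul1 //.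
Qed.
Lemma homV x : phi (ginv x) = ginv (phi x).
Proof. by apply: gp_inv_uniq; rewrite -hom gp_mulV hom1. Qed.
End Hom.

Lemma eval_cat (G : grp) k (g : 'I_k -> G) u v :
  eval_word g (u ++ v) = gmul (eval_word g u) (eval_word g v).
Proof. by elim: u => [|l u IH] /=; rewrite ?gmul1 // IH gmulA. Qed.
Lemma eval_rcons (G : grp) k (g : 'I_k -> G) u l :
  eval_word g (rcons u l) = gmul (eval_word g u) (letter_val g l).
Proof. by rewrite -cats1 eval_cat /= gp_mul1. Qed.

Lemma In_nth (T : Type) (x0 x : T) (s : seq T) : List.In x s -> exists i, i < size s /\ nth x0 s i = x.
Proof.
elim: s => [|a s IH] //= [->|/IH [i [h1 h2]]]; first by exists 0.
by exists i.+1.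
Qed.
Lemma mem_In (T : eqType) (x : T) (s : seq T) : x \in s -> List.In x s.
Proof. by elim: s => [|a s IH] //=; rewrite inE => /orP [/eqP ->|/IH]; [left|right]. Qed.

Lemma conv_inj (T : finType) (u v u' v' : seq T) : conv u v = conv u' v' -> u = u' /\ v = v'.
Proof.
rewrite !conv_pad => e; split.
- rewrite -(unpad_pad (maxn (size u) (size v)) u) -(unpad_pad (maxn (size u') (size v')) u').
  move/(congr1 unzip1): e; rewrite !unzip1_zip ?size_pad //; try lia; by move=> ->.
- rewrite -(unpad_pad (maxn (size u) (size v)) v) -(unpad_pad (maxn (size u') (size v')) v').
  move/(congr1 unzip2): e; rewrite !unzip2_zip ?size_pad //; try lia; by move=> ->.
Qed.

Lemma conv_diag (T : finType) (u : seq T) : conv u u = map (fun t => (Some t, Some t)) u.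
Proof.
apply: (@eq_from_nth _ (NN T)); first by rewrite /conv !size_map size_iota maxnn.
move=> i; rewrite /conv size_map size_iota maxnn => hi.
rewrite (nth_map 0) ?size_iota // nth_iota // add0n.
elim: u i hi => [|a u IH] [|i] //= hi; exact: IH.
Qed.

Lemma regular_if (T : finType) (P : Prop) (L : seq T -> Prop) :
  (P -> regular L) -> regular (fun w => P /\ L w).
Proof.
case: (excluded_middle_informative P) => [p h|np _].
  by apply: regular_ext (h p) => w; split=> [|[]].
by apply: regular_ext (@regular_empty T) => w; split=> [|[]].
Qed.

Section Main.
Variables (G H : grp) (phi : H -> G).
Hypotheses (hom : is_hom phi) (inj : forall x y, phi x = phi y -> x = y).
Variable reps : seq G.
Hypothesis Hreps : forall g : G, exists r, List.In r reps /\ exists h, g = gmul (phi h) r.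
Variables (kH : nat) (gH : 'I_kH -> H).
Hypothesis genH : generates gH.
Variables (LH : seq (letter kH) -> Prop) (psiH : seq (letter kH) -> H).
Hypothesis car : cayley_automatic_rep gH LH psiH.

Local Notation "x * y" := (gmul x y).
Local Notation n := (size reps).
Local Notation k := (kH + n).

Definition rep (j : 'I_n) : G := nth (gone G) reps j.
Definition gensG (i : 'I_k) : G :=
  match split i with inl j => phi (gH j) | inr j => rep j end.
Definition emb (l : letter kH) : letter k := (lshift n l.1, l.2).
Definition dec (l : letter k) : option (letter kH) :=
  match split l.1 with inl j => Some (j, l.2) | inr _ => None end.
Definition repl (j : 'I_n) : letter k := (rshift kH j, false).

Lemma dec_emb l : dec (emb l) = Some l.
Proof. by case: l => j b; rewrite /dec /emb /= (unsplitK (inl j)). Qed.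
Lemma dec_repl j : dec (repl j) = None.
Proof. by rewrite /dec /repl /= (unsplitK (inr j)). Qed.
Lemma val_emb l : letter_val gensG (emb l) = phi (letter_val gH l).
Proof.
case: l => j [] /=; rewrite /letter_val /= /gensG (unsplitK (inl j)) //.
by rewrite homV.
Qed.
Lemma val_repl j : letter_val gensG (repl j) = rep j.
Proof. by rewrite /letter_val /= /gensG (unsplitK (inr j)). Qed.
Lemma eval_emb u : eval_word gensG (map emb u) = phi (eval_word gH u).
Proof. by elim: u => [|l u IH] /=; rewrite ?hom1 // IH val_emb hom. Qed.
Lemma pmap_dec_emb u : pmap dec (map emb u) = u.
Proof. by elim: u => //= l u ->; rewrite dec_emb. Qed.

Definition same (x y : G) := exists h, x = phi h * y.
Definition canon (j : 'I_n) := forall j' : 'I_n, j' < j -> ~ same (rep j) (rep j').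

Lemma canon_exists g : exists j h, canon j /\ g = phi h * rep j.
Proof.
have [r [ir [h eg]]] := Hreps g.
have [i0 [hi0 ei0]] := In_nth (gone G) ir.
pose P m := pb (m < n /\ exists h, g = phi h * nth (gone G) reps m).
have exP : exists m, P m by exists i0; apply/pbE; split=> //; exists h; rewrite ei0.
case: (ex_minnP exP) => m /pbE [mn [h' eg']] mmin.
exists (Ordinal mn), h'; split=> // j' ltj [h2 e2].
have : P j' by apply/pbE; split; [exact: ltn_ord|exists (gmul h' h2); rewrite hom -gmulA -e2].
move/mmin; rewrite leqNgt; by move/negP; apply.
Qed.

Lemma canon_uniq j j' h h' : canon j -> canon j' -> phi h * rep j = phi h' * rep j' ->
  j = j' /\ h = h'.
Proof.
move=> cj cj' e.
have s1 : same (rep j) (rep j').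
  exists (gmul (ginv h) h'); rewrite hom homV // -gmulA -e gp_mulKl //.
have s2 : same (rep j') (rep j).
  exists (gmul (ginv h') h); rewrite hom homV // -gmulA e gp_mulKl //.
have jj : j = j'.
  case: (ltngtP j j') => [lt|lt|eq]; first by case: (cj' j lt s2).
    by case: (cj j' lt s1).
  exact: val_inj.
subst j'; split=> //; apply: inj; exact: (gp_mulIr e).
Qed.

Definition LG (w : seq (letter k)) :=
  exists u j, [/\ LH u, canon j & w = rcons (map emb u) (repl j)].
Definition psiG (w : seq (letter k)) : G :=
  if rev w is l :: rest then phi (psiH (pmap dec (rev rest))) * letter_val gensG l else gone G.

Lemma psiG_rcons u j : psiG (rcons (map emb u) (repl j)) = phi (psiH u) * rep j.
Proof. by rewrite /psiG rev_rcons revK pmap_dec_emb val_repl. Qed.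

Lemma evalG_rcons u j : eval_word gensG (rcons (map emb u) (repl j)) = phi (eval_word gH u) * rep j.
Proof. by rewrite eval_rcons eval_emb val_repl. Qed.

Lemma genG : generates gensG.
Proof.
move=> g; have [j [h [_ ->]]] := canon_exists g.
have [c ec] := genH h.
by exists (rcons (map emb c) (repl j)); rewrite evalG_rcons ec.
Qed.

Definition Wh (h : H) (u v : seq (letter kH)) := [/\ LH u, LH v & psiH v = psiH u * h].

Lemma Wh_reg h : regular (PL (Wh h)).
Proof.
case: car => regL injL surL autL.
have [c <-] := genH h.
elim: c => [|l c IH] /=.
  apply: conv2PL; apply: regular_ext (convL_id regL) => x; split.
  - move=> [u [v [[lu ->] ->]]]; exists u, u; split=> //; split=> //; rewrite gp_mul1 //.
  - move=> [u [v [[lu lv e] ->]]]; exists u, v; split=> //; split=> //.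
    by apply: injL => //; rewrite e gp_mul1.
have hl : regular (PL (Wh (letter_val gH l))).
  apply: conv2PL; case: l => i [] /=.
  - apply: regular_ext (convL_swap (autL i)) => x; split.
    + move=> [u [v [[lv lu e] ->]]]; exists u, v; split=> //; split=> //.
      by rewrite /letter_val /= e gp_mulKr.
    + move=> [u [v [[lu lv e] ->]]]; exists u, v; split=> //; split=> //.
      by move: e; rewrite /letter_val /= => ->; rewrite -gmulA gmulV gp_mul1.
  - apply: regular_ext (autL i) => x; split.
    + by move=> [u [v [[lu lv e] ->]]]; exists u, v.
    + by move=> [u [v [[lu lv e] ->]]]; exists u, v.
apply: regular_ext (PL_comp hl IH) => x; split.
- move=> [u [w [N [[v [[lu lv e1] [_ lw e2]]] hu hw ->]]]]; exists u, w, N; split=> //.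
  by split=> //; rewrite e2 e1 gmulA.
- move=> [u [w [N [[lu lw e] hu hw ->]]]]; exists u, w, N; split=> //.
  have [v lv ev] := surL (psiH u * letter_val gH l).
  exists v; split; split=> //; rewrite e ev gmulA //.
Qed.

Definition AppR (j j' : 'I_n) (R : seq (letter kH) -> seq (letter kH) -> Prop) u' v' :=
  exists u v, [/\ R u v, u' = rcons (map emb u) (repl j) & v' = rcons (map emb v) (repl j')].

Lemma App_reg j j' h : regular (convL (AppR j j' (Wh h))).
Proof. exact: PL2conv (PL_app dec_emb (dec_repl j) (dec_repl j') (Wh_reg h)). Qed.

Lemma all_In (j : 'I_n) : List.In j (enum 'I_n).
Proof. by apply: mem_In; rewrite mem_enum. Qed.

Lemma LG_reg : regular LG.
Proof.
have := @regular_bigor _ _ (fun j w => canon j /\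
     convL (AppR j j (Wh (gone H))) (map (fun t => (Some t, Some t)) w)) (enum 'I_n).
move=> /(_ _) h; apply: regular_ext (h _) => [w|j]; last first.
  by apply: regular_if => _; exact: regular_map (App_reg j j (gone H)).
split.
- move=> [j [_ [cj [a [b [[u [v [[lu lv e] -> ->]]]]]]]]] ex.
  rewrite -conv_diag in ex; have [ea eb] := conv_inj ex.
  exists u, j; split=> //.
- move=> [u [j [lu cj ->]]]; exists j; split; first exact: all_In.
  split=> //; exists (rcons (map emb u) (repl j)), (rcons (map emb u) (repl j)).
  rewrite conv_diag; split=> //; exists u, u; split=> //; split=> //; rewrite gp_mul1 //.
Qed.

Lemma LG_inj u v : LG u -> LG v -> psiG u = psiG v -> u = v.
Proof.
case: car => regL injL surL autL.
move=> [u1 [j1 [l1 c1 ->]]] [u2 [j2 [l2 c2 ->]]]; rewrite !psiG_rcons => e.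
have [ej eh] := canon_uniq c1 c2 e; subst j2.
by rewrite (injL _ _ l1 l2 eh).
Qed.

Lemma LG_sur g : exists2 w, LG w & psiG w = g.
Proof.
case: car => regL injL surL autL.
have [j [h [cj ->]]] := canon_exists g.
have [u lu eu] := surL h.
by exists (rcons (map emb u) (repl j)); [exists u, j|rewrite psiG_rcons eu].
Qed.

Lemma LG_aut (i : 'I_k) :
  fa_recognizable (fun u v => [/\ LG u, LG v & psiG v = psiG u * gensG i]).
Proof.
case: car => regL injL surL autL.
have := @regular_bigor _ _ (fun j x => exists j' h, [/\ canon j, canon j',
     rep j * gensG i = phi h * rep j' & convL (AppR j j' (Wh h)) x]) (enum 'I_n).
move=> /(_ _) hb; apply: regular_ext (hb _) => [x|j]; last first.
  case: (excluded_middle_informative (exists j' h, [/\ canon j, canon j' & rep j * gensG i = phi h * rep j'])).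
  - move=> [j0 [h0 [cj cj0 e0]]]; apply: regular_ext (App_reg j j0 h0) => x; split.
      by move=> cx; exists j0, h0; split.
    move=> [j1 [h1 [_ cj1 e1 cx]]].
    have [ej eh] := canon_uniq cj0 cj1 (etrans (esym e0) e1); by subst.
  - move=> nex; apply: regular_ext (@regular_empty _) => x; split=> // -[j' [h [cj cj' e _]]].
    by apply: nex; exists j', h.
split.
- move=> [j [_ [j' [h [cj cj' e [w [w' [[u [v [[lu lv ev] -> ->]]] ->]]]]]]]].
  exists (rcons (map emb u) (repl j)), (rcons (map emb v) (repl j')); split=> //.
  split; [by exists u, j|by exists v, j'|].
  by rewrite !psiG_rcons ev hom -!gmulA e.
- move=> [w [w' [[[u [j [lu cj ->]]] [v [j'' [lv cj'' ->]]]] e] ->]].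
  have [j' [h [cj' e']]] := canon_exists (rep j * gensG i).
  exists j; split; first exact: all_In.
  exists j', h; split=> //.
  move: e; rewrite !psiG_rcons -gmulA e' gmulA -hom => e.
  have [ej eh] := canon_uniq cj'' cj' e; subst j''.
  exists (rcons (map emb u) (repl j)), (rcons (map emb v) (repl j')); split=> //.
  by exists u, v; split=> //; split.
Qed.
End Main.
Unset Implicit Arguments.

Theorem mainTheorem4 (G H : grp) (phi : H -> G) (Q : nat) (f : nat -> R) :
  finitely_generated G ->
  is_hom phi -> (forall x y, phi x = phi y -> x = y) ->
  finite_index_image phi ->
  in_frakF Q f ->
  in_Bf H Q f -> in_Bf G Q f.
Proof.
move=> _ hom inj [reps Hreps] _ [kH [gH [genH [LH [psiH [car [N [K [M [QN K0 M0 bnd]]]]]]]]]].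
exists (kH + size reps), (@gensG G H phi reps kH gH); split; first exact: (genG hom Hreps genH).
exists (@LG G H phi reps kH LH), (@psiG G H phi reps kH gH psiH); split.
  split.
  - exact: (LG_reg phi reps genH car).
  - exact: (LG_inj hom inj car).
  - exact: (LG_sur hom Hreps car).
  - exact: (LG_aut hom inj Hreps genH car).
exists N, (3 * K)%N, M; split=> //; first by lia.
move=> m hm w [u [j [lu cj ew]]] sw.
have su : (size u <= m)%N by move: sw; rewrite ew size_rcons size_map; lia.
have [d [[c [sc ec]] hd]] := bnd m hm u lu su.
case: d sc hd => [|d] sc hd.
- exists 0%N; split.
    exists [::]; split=> //=.
    move: sc; case: c ec => //= ec _.
    have epi : psiH u = eval_word gH u.
      by rewrite -(gp_mul1 (eval_word gH u)) ec gmulA gp_mulV gmul1.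
    by rewrite ew (evalG_rcons hom) psiG_rcons epi gmulV.
  have h0 : Rle 0 (Rmult (INR K) (f (M * m)%N)) by apply: Rle_trans (pos_INR _) hd.
  rewrite mult_INR.
  simpl INR; lra.
- exists (d.+1 + 2)%N; split.
    exists ([:: (rshift kH j, true)] ++ map (@emb G reps kH) c ++ [:: @repl G reps kH j]); split.
      by rewrite /= size_cat size_map /=; lia.
    rewrite ew (evalG_rcons hom) psiG_rcons /= eval_cat (eval_emb hom) /= gp_mul1 val_repl.
    rewrite /letter_val /= /gensG (unsplitK (inr j)) ec.
    rewrite gp_invM hom homV // -!gmulA; congr gmul; rewrite !gmulA; congr gmul.
  apply: (@Rle_trans _ (Rmult (INR 3) (INR d.+1))).
    rewrite -mult_INR; apply: le_INR; apply/leP; lia.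
  rewrite mult_INR Rmult_assoc; apply: Rmult_le_compat_l => //; exact: pos_INR.
Qed.
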